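(* Let $R$ be a commutative elementary divisor domain and let $E=\mathrm{diag}(\varepsilon_1,\dots,\varepsilon_n)$, $\Phi=\mathrm{diag}(\varphi_1,\dots,\varphi_n)$ be nonsingular $d$-matrices with $\varphi_i\mid\varepsilon_i$ for all $i$. Then every class $\mathbf G_\Phi L=\{HL:H\in\mathbf G_\Phi\}$, $L\in\mathbf L(E,\Phi)$, contains exactly one element of $\mathbf V(E,\Phi)$ if and only if the following holds: for every index $i\in\{2,\dots,n\}$ such that $\varphi_i$ and $\varphi_{i-1}$ are not associates, every non-unit divisor $\delta$ of $\varphi_i/\varphi_{i-1}$ satisfies $\big(\delta,\ \frac{\varphi_i}{(\varphi_i,\varepsilon_{i-1})}\big)\ne1$.
   Context: Elementary divisor domain: commutative integral domain over which every matrix is equivalent to a $d$-matrix (diagonal $\mathrm{diag}(\varphi_1,\dots)$ with $\varphi_i\mid\varphi_{i+1}$). $\mathbf G_\Phi=\{H\in GL_n(R):\exists K\in GL_n(R),\ H\Phi=\Phi K\}$; $\mathbf L(E,\Phi)=\{L\in GL_n(R):\exists S\in M_n(R),\ LE=\Phi S\}$. For $f\in R$, $K(f)$ is a fixed complete system of representatives of the residue classes of $R$ modulo $fR$. The Kazimirskii set $\mathbf V(E,\Phi)$ is the set of lower unitriangular $n\times n$ matrices whose entry in position $(i,j)$, $i>j$, equals $\frac{\varphi_i}{(\varphi_i,\varepsilon_j)}k_{ij}$ with $k_{ij}\in K\big(\frac{(\varphi_i,\varepsilon_j)}{\varphi_j}\big)$. *)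

(* Defs.v *)
From HB Require Import structures.
From mathcomp Require Import all_boot all_order all_algebra.
Set Implicit Arguments. Unset Strict Implicit. Unset Printing Implicit Defensive.
Import Order.TTheory GRing.Theory Num.Theory.
Local Open Scope ring_scope.

Section Defs.
Variable R : idomainType.

Definition divides (a b : R) : Prop := exists c, b = c * a.

Definition assoc (a b : R) : Prop := divides a b /\ divides b a.

Definition is_gcd (a b g : R) : Prop :=
  [/\ divides g a, divides g b & forall d, divides d a -> divides d b -> divides d g].

Definition complete_residues (f : R) (S : pred R) : Prop :=
  forall a : R, exists! k, k \in S /\ divides f (a - k).

Definition is_dmx m n (D : 'M[R]_(m, n)) : Prop :=
  (forall (i : 'I_m) (j : 'I_n), (i : nat) <> j -> D i j = 0) /\
  (forall (i i' : 'I_m) (j j' : 'I_n), (i : nat) = j -> (i' : nat) = j' ->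
      (i' : nat) = i.+1 -> divides (D i j) (D i' j')).

Definition elementary_divisor_domain : Prop :=
  forall m n (A : 'M[R]_(m, n)), exists (P : 'M[R]_m) (Q : 'M[R]_n),
    [/\ P \in unitmx, Q \in unitmx & is_dmx (P *m A *m Q)].

(* diagonal entries of a nonsingular d-matrix diag(e_1,...,e_n) *)
Definition nonsing_dseq n (e : 'I_n -> R) : Prop :=
  (forall i, e i != 0) /\
  (forall i j : 'I_n, (j : nat) = i.+1 -> divides (e i) (e j)).

Definition diagm n (e : 'I_n -> R) : 'M[R]_n := diag_mx (\row_i e i).

Definition G_Phi n (Phi : 'M[R]_n) (H : 'M[R]_n) : Prop :=
  H \in unitmx /\ exists K : 'M[R]_n, K \in unitmx /\ H *m Phi = Phi *m K.

Definition L_set n (E Phi : 'M[R]_n) (L : 'M[R]_n) : Prop :=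
  L \in unitmx /\ exists S : 'M[R]_n, L *m E = Phi *m S.

(* Kazimirskii set V(E, Phi), relative to the chosen gcd function gcdf
   and the chosen systems of representatives K *)
Definition V_set n (gcdf : R -> R -> R) (K : R -> pred R)
    (eps phi : 'I_n -> R) (V : 'M[R]_n) : Prop :=
  (forall i, V i i = 1) /\
  (forall i j : 'I_n, (i < j)%N -> V i j = 0) /\
  (forall i j : 'I_n, (j < i)%N ->
     exists q f k : R,
       [/\ q * gcdf (phi i) (eps j) = phi i,
           f * phi j = gcdf (phi i) (eps j),
           k \in K f &
           V i j = q * k]).

End Defs.

(* Main.v *)
Require Import Defs.
From HB Require Import structures.
From mathcomp Require Import all_boot all_order all_algebra.
From mathcomp Require Import ring zify.
From Stdlib Require Import ClassicalEpsilon FunctionalExtensionality.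
Set Implicit Arguments. Unset Strict Implicit. Unset Printing Implicit Defensive.
Import GRing.Theory.
Local Open Scope ring_scope.


Section Basics.
Variable R : idomainType.
Implicit Types a b c d : R.

Definition dq (a b : R) : R := epsilon (inhabits 0) (fun c => b = c * a).

Lemma dqP a b : divides a b -> b = dq a b * a.
Proof. move=> H; exact: (epsilon_spec (inhabits 0) (fun c => b = c * a) H). Qed.

Lemma div_refl a : divides a a. Proof. by exists 1; rewrite mul1r. Qed.
Lemma div_trans a b c : divides a b -> divides b c -> divides a c.
Proof. by move=> [x ->] [y ->]; exists (y * x); rewrite mulrA. Qed.
Lemma div_mulr a b c : divides a b -> divides a (b * c).
Proof. by move=> [x ->]; exists (c * x); ring. Qed.
Lemma div_mull a b c : divides a b -> divides a (c * b).
Proof. by rewrite mulrC; apply: div_mulr. Qed.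
Lemma div_add a b c : divides a b -> divides a c -> divides a (b + c).
Proof. by move=> [x ->] [y ->]; exists (x + y); rewrite mulrDl. Qed.
Lemma div_opp a b : divides a b -> divides a (- b).
Proof. by move=> [x ->]; exists (- x); rewrite mulNr. Qed.
Lemma div0 a : divides a 0. Proof. by exists 0; rewrite mul0r. Qed.
Lemma div_1 a : divides 1 a. Proof. by exists a; rewrite mulr1. Qed.
Lemma div_sum (I : finType) (P : pred I) (F : I -> R) a :
  (forall i, P i -> divides a (F i)) -> divides a (\sum_(i | P i) F i).
Proof.
move=> H; apply: (big_ind (divides a)); [exact: div0|exact: div_add|exact: H].
Qed.
Lemma div_unit d u : divides d u -> u \is a GRing.unit -> d \is a GRing.unit.
Proof.
move=> [x ->]; rewrite unitrM => /andP[_ ->] //.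
Qed.
Lemma div_one_unit d : divides d 1 -> d \is a GRing.unit.
Proof. by move=> H; apply: (div_unit H); rewrite unitr1. Qed.
Lemma unit_div u a : u \is a GRing.unit -> divides u a.
Proof. by move=> Hu; exists (a * u^-1); rewrite mulrVK. Qed.
Lemma div_cancel a b c : c != 0 -> divides (a * c) (b * c) -> divides a b.
Proof. by move=> Hc [x]; rewrite mulrA => /(mulIf Hc) ->; exists x. Qed.
Lemma div_mul2 a b c : divides a b -> divides (a * c) (b * c).
Proof. by move=> [x ->]; exists x; rewrite mulrA. Qed.

Definition cop a b := exists x y, x * a + y * b = 1.

Lemma cop_div a b c : cop a b -> divides a (b * c) -> divides a c.
Proof.
move=> [x [y E]] H; have -> : c = (x * a + y * b) * c by rewrite E mul1r.
rewrite mulrDl; apply: div_add; first by rewrite -mulrA; apply: div_mull; apply: div_mulr; exact: div_refl.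
by rewrite -mulrA; apply: div_mull.
Qed.

Lemma cop_mul a b c : cop a b -> cop a c -> cop a (b * c).
Proof.
move=> [x [y E]] [x' [y' E']]; exists (x * x' * a + x * y' * c + y * b * x'), (y * y').
rewrite -E' -[X in _ = X]mulr1 -E; ring.
Qed.

Lemma cop_cd a b d : cop a b -> divides d a -> divides d b -> d \is a GRing.unit.
Proof.
move=> [x [y E]] Ha Hb; apply: div_one_unit; rewrite -E.
by apply: div_add; apply: div_mull.
Qed.

Lemma cop_sym a b : cop a b -> cop b a.
Proof. by move=> [x [y E]]; exists y, x; rewrite addrC. Qed.

Lemma cop_unit a b : b \is a GRing.unit -> cop a b.
Proof. by move=> Hb; exists 0, b^-1; rewrite mul0r add0r mulVr. Qed.

End Basics.


Section Bez.
Variable R : idomainType.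
Hypothesis Hedd : elementary_divisor_domain R.

Lemma bez (a b : R) : exists g x y, g = x * a + y * b /\ divides g a /\ divides g b.
Proof.
pose A : 'M[R]_(1,2) := \matrix_(i < 1, j < 2) (if (j : nat) == 0%N then a else b).
have [P [Q [HP HQ [Hdiag _]]]] := Hedd A.
have HD : P *m A *m Q = P *m (A *m Q) by rewrite mulmxA.
have AQ : A *m Q = invmx P *m (P *m A *m Q) by rewrite HD mulKmx.
have e01 : (A *m Q) 0 1 = 0.
  rewrite AQ !mxE big_ord1 (Hdiag 0 1) ?mulr0 //.
set g := (A *m Q) 0 0.
have Ae : A = (A *m Q) *m invmx Q by rewrite mulmxK.
have Hd : forall j, divides g (A 0 j).
  move=> j; rewrite Ae !mxE !big_ord_recl big_ord0.
  have -> : lift ord0 (ord0 : 'I_1) = (1 : 'I_2) by apply/val_inj.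
  rewrite e01 mul0r addr0.
  by rewrite addr0 /divides; exists (invmx Q ord0 j); rewrite mulrC.
exists g, (Q 0 0), (Q 1 0); split; last split.
- rewrite /g !mxE !big_ord_recl big_ord0 !mxE /= addr0.
  have -> : lift ord0 (ord0 : 'I_1) = (1 : 'I_2) by apply/val_inj.
  by rewrite mulrC [b * _]mulrC.
- by have := Hd 0; rewrite mxE.
- by have := Hd 1; rewrite mxE.
Qed.

End Bez.

Section Gcd.
Variable R : idomainType.
Hypothesis Hedd : elementary_divisor_domain R.
Variable gcdf : R -> R -> R.
Hypothesis Hgcd : forall a b : R, is_gcd a b (gcdf a b).

Lemma cop_of_cd (a b : R) :
  (forall d, divides d a -> divides d b -> d \is a GRing.unit) -> cop a b.
Proof.
move=> H; have [g [x [y [E [Ha Hb]]]]] := bez Hedd a b.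
have Hg := H g Ha Hb; exists (g^-1 * x), (g^-1 * y).
by rewrite -!mulrA -mulrDr -E mulVr.
Qed.

Lemma gcd_unit_cop (a b : R) : gcdf a b \is a GRing.unit -> cop a b.
Proof.
move=> Hu; apply: cop_of_cd => d Ha Hb; have [_ _ H] := Hgcd a b.
exact: div_unit (H d Ha Hb) Hu.
Qed.

Lemma qdiv (p e l q : R) : p != 0 -> q * gcdf p e = p ->
  divides p (l * e) -> divides q l.
Proof.
move=> Hp Hq Hd; have [Hgp [e' He] Hmax] := Hgcd p e.
set g := gcdf p e in Hq He Hmax Hgp.
have Hg0 : g != 0 by apply: contraNneq Hp => g0; rewrite -Hq g0 mulr0.
have Hcop : cop q e'.
  apply: cop_of_cd => d [x Hx] [y Hy].
  have : divides (d * g) g.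
    apply: Hmax.
    - by rewrite -Hq Hx; exists x; rewrite mulrA.
    - by rewrite He Hy; exists y; rewrite mulrA.
  rewrite -{2}(mul1r g) => /(div_cancel Hg0); exact: div_one_unit.
apply: (cop_div Hcop); rewrite mulrC.
move: Hd => [c]; rewrite He -Hq mulrA mulrA => /(mulIf Hg0) ->.
by exists c.
Qed.

End Gcd.


Section Mx.
Variable R : comUnitRingType.

Lemma sum_lift n (h : 'I_n.+1) (F : 'I_n.+1 -> R) :
  \sum_(k < n.+1) F k = F h + \sum_(k < n) F (lift h k).
Proof. by rewrite (bigD1_ord h) //=. Qed.

Definition ext n (h : 'I_n.+1) (a : R) (r c : 'I_n -> R) (A : 'M[R]_n) : 'M[R]_n.+1 :=
  \matrix_(x, y) match unlift h x, unlift h y with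
                 | Some i, Some j => A i j
                 | Some i, None => c i
                 | None, Some j => r j
                 | None, None => a end.

Lemma ext_hh n h a r c (A : 'M_n) : ext h a r c A h h = a.
Proof. by rewrite mxE unlift_none. Qed.
Lemma ext_hl n h a r c (A : 'M_n) j : ext h a r c A h (lift h j) = r j.
Proof. by rewrite mxE unlift_none liftK. Qed.
Lemma ext_lh n h a r c (A : 'M_n) i : ext h a r c A (lift h i) h = c i.
Proof. by rewrite mxE unlift_none liftK. Qed.
Lemma ext_ll n h a r c (A : 'M_n) i j : ext h a r c A (lift h i) (lift h j) = A i j.
Proof. by rewrite mxE !liftK. Qed.

Definition extE := (ext_hh, ext_hl, ext_lh, ext_ll).

Lemma ext_mul n h a r c (A : 'M_n) a' r' c' (A' : 'M_n) :
  ext h a r c A *m ext h a' r' c' A' =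
  ext h (a * a' + \sum_k r k * c' k) (fun j => a * r' j + \sum_k r k * A' k j)
        (fun i => c i * a' + \sum_k A i k * c' k) (A *m A' + \matrix_(i, j) (c i * r' j)).
Proof.
apply/matrixP => x y; rewrite mxE (sum_lift h).
case: (unliftP h x) => [i ->|->]; case: (unliftP h y) => [j ->|->];
  rewrite !extE ?mxE; under eq_bigr do rewrite !extE; rewrite // addrC.
all: by [].
Qed.

Lemma ext1 n h : ext h 1 (fun _ => 0) (fun _ => 0) (1%:M : 'M[R]_n) = 1%:M.
Proof.
apply/matrixP => x y; rewrite [RHS]mxE.
case: (unliftP h x) => [i ->|->]; case: (unliftP h y) => [j ->|->];
  rewrite !extE ?mxE ?eqxx //.
- by rewrite (inj_eq (@lift_inj _ h)).
- by rewrite eq_sym (negPf (neq_lift _ _)).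
- by rewrite (negPf (neq_lift _ _)).
Qed.

Lemma ext_unit n h (A : 'M[R]_n) : A \in unitmx -> ext h 1 (fun _ => 0) (fun _ => 0) A \in unitmx.
Proof.
move=> HA; suff: ext h 1 (fun _ => 0) (fun _ => 0) A *m ext h 1 (fun _ => 0) (fun _ => 0) (invmx A) = 1%:M by case/mulmx1_unit.
rewrite ext_mul mulmxV // mulr1 big1 ?addr0; last by move=> k _; rewrite mulr0.
rewrite -[RHS](ext1 h); congr ext; [apply: functional_extensionality => j|apply: functional_extensionality => i|].
- by rewrite mulr0 add0r big1 // => k _; rewrite mul0r.
- by rewrite mul0r add0r big1 // => k _; rewrite mulr0.
- by apply/matrixP => i j; rewrite !mxE mul0r addr0.
Qed.

Lemma det_ext0 n (c : 'I_n -> R) (A : 'M[R]_n) : \det (ext ord0 1 (fun _ => 0) c A) = \det A.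
Proof.
rewrite (expand_det_row _ ord0) big_ord_recl big1 ?addr0; last first.
  by move=> j _; rewrite ext_hl mul0r.
rewrite ext_hh mul1r /cofactor /= expr0 mul1r; congr (\det _).
by apply/matrixP => i j; rewrite !mxE /= !liftK.
Qed.

Definition E2 N (p q : 'I_N) (a b c d : R) : 'M[R]_N :=
  \matrix_(x, y) if x == p then (if y == p then a else if y == q then b else 0)
                 else if x == q then (if y == p then c else if y == q then d else 0)
                 else (x == y)%:R.

Lemma sum2 N (p q : 'I_N) (u v : R) (F : 'I_N -> R) : p != q ->
  \sum_k (if k == p then u else if k == q then v else 0) * F k = u * F p + v * F q.
Proof.
move=> pq; rewrite (bigD1 p) //= eqxx (bigD1 q) //=; last by rewrite eq_sym.
rewrite eq_sym (negPf pq) eqxx big1 ?addr0 // => k /andP[kp kq].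
by rewrite (negPf kp) (negPf kq) mul0r.
Qed.

Lemma sum2r N (p q : 'I_N) (u v : R) (F : 'I_N -> R) : p != q ->
  \sum_k F k * (if k == p then u else if k == q then v else 0) = F p * u + F q * v.
Proof.
move=> pq; rewrite mulrC [F q * _]mulrC -(sum2 _ _ F pq); apply: eq_bigr => k _; by rewrite mulrC.
Qed.

Lemma sum_delta N (x : 'I_N) (F : 'I_N -> R) : \sum_k (x == k)%:R * F k = F x.
Proof.
rewrite (bigD1 x) //= eqxx mul1r big1 ?addr0 // => k kx.
by rewrite eq_sym (negPf kx) mul0r.
Qed.

Lemma sum_deltar N (x : 'I_N) (F : 'I_N -> R) : \sum_k F k * (k == x)%:R = F x.
Proof.
rewrite (bigD1 x) //= eqxx mulr1 big1 ?addr0 // => k kx.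
by rewrite (negPf kx) mulr0.
Qed.

Lemma E2_mull N (p q : 'I_N) a b c d (A : 'M[R]_N) x y : p != q ->
  (E2 p q a b c d *m A) x y =
  if x == p then a * A p y + b * A q y
  else if x == q then c * A p y + d * A q y else A x y.
Proof.
move=> pq; rewrite mxE; under eq_bigr do rewrite mxE.
case: ifP => _; first exact: sum2.
case: ifP => _; first exact: sum2.
exact: sum_delta.
Qed.

Lemma E2_mulr N (p q : 'I_N) a b c d (A : 'M[R]_N) x y : p != q ->
  (A *m E2 p q a b c d) x y =
  if y == p then A x p * a + A x q * c
  else if y == q then A x p * b + A x q * d else A x y.
Proof.
move=> pq; rewrite mxE; under eq_bigr do rewrite mxE.
have E : forall k, A x k * (if k == p then if y == p then a else if y == q then b else 0
                 else if k == q then if y == p then c else if y == q then d else 0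
                 else (k == y)%:R) =
   A x k * (if y == p then (if k == p then a else if k == q then c else 0)
            else if y == q then (if k == p then b else if k == q then d else 0)
            else (k == y)%:R).
  move=> k; congr (_ * _).
  by do ![case: eqP => ?; subst => //=]; rewrite ?eqxx in pq.
under eq_bigr do rewrite E.
case: ifP => _; first exact: sum2r.
case: ifP => _; first exact: sum2r.
exact: sum_deltar.
Qed.


Lemma E2_mul N (p q : 'I_N) a b c d a' b' c' d' : p != q ->
  E2 p q a b c d *m E2 p q a' b' c' d' =
  E2 p q (a * a' + b * c') (a * b' + b * d') (c * a' + d * c') (c * b' + d * d').
Proof.
move=> pq; apply/matrixP => x y; rewrite E2_mull // !mxE.
by do ![case: eqP => ?; subst => //=]; rewrite ?eqxx in pq; rewrite ?mulr0 ?mulr1 ?addr0 ?add0r.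
Qed.

Lemma E2_1 N (p q : 'I_N) : p != q -> E2 p q 1 0 0 1 = 1%:M.
Proof.
move=> pq; apply/matrixP => x y; rewrite !mxE.
by do ![case: eqP => ?; subst => //=]; rewrite ?eqxx in pq.
Qed.

Lemma E2_unit N (p q : 'I_N) a b c d : p != q -> a * d - b * c = 1 ->
  E2 p q a b c d \in unitmx.
Proof.
move=> pq H; suff: E2 p q a b c d *m E2 p q d (- b) (- c) a = 1%:M by case/mulmx1_unit.
rewrite E2_mul // -(E2_1 pq); congr E2; [rewrite -H; ring|ring|ring|rewrite -H; ring].
Qed.

End Mx.


Section LTC.
Variable R : idomainType.
Hypothesis Hedd : elementary_divisor_domain R.

Lemma LTC (m : nat) (u : 'I_m.+1 -> R) :
  exists (g : R) (K : 'M[R]_m.+1), K \in unitmx /\ (forall j, u j = g * K ord0 j) /\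
    (forall i j : 'I_m.+1, (0 < i)%N -> (i < j)%N -> K i j = 0).
Proof.
elim: m u => [|m IH] u.
  exists (u ord0), 1%:M; split; first exact: unitmx1.
  split; first by move=> j; rewrite (ord1 j) mxE eqxx mulr1.
  by move=> i j; rewrite (ord1 i).
pose u' := fun j : 'I_m.+1 => u (lift ord_max j).
have [g' [K' [HK' [Hu' Hs']]]] := IH u'.
have [g [x [y [Eg [[al Hal] [be Hbe]]]]]] := bez Hedd g' (u ord_max).
have Hu0 : forall j, u (lift ord_max j) = g' * K' ord0 j by move=> j; exact: Hu'.
case: (eqVneq g 0) => [g0|gn0].
  exists 0, 1%:M; split; first exact: unitmx1.
  split; last by move=> i j _ ij; rewrite mxE -val_eqE /= (ltn_eqF ij).
  move=> j; rewrite mul0r; case: (unliftP ord_max j) => [j' ->|->].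
    by rewrite Hu0 Hal g0 !mulr0 mul0r.
  by rewrite Hbe g0 mulr0.
have Hxy : x * al + y * be = 1.
  apply: (mulIf gn0); rewrite mul1r; apply: esym; rewrite {1}Eg Hal Hbe; ring.
have pq : (ord0 : 'I_m.+2) != ord_max by rewrite -val_eqE.
have o0 : (ord0 : 'I_m.+2) = lift ord_max ord0 by apply/val_inj.
pose E := ext ord_max 1 (fun _ => 0) (fun _ => 0) K'.
exists g, (E2 ord0 ord_max al be (- y) x *m E); split.
  rewrite unitmx_mul E2_unit // ?ext_unit //; rewrite -Hxy; ring.
split.
  move=> j; rewrite E2_mull // eqxx; case: (unliftP ord_max j) => [j' ->|->].
    by rewrite /E o0 !extE mulr0 addr0 Hu0 Hal mulrCA mulrA.
  by rewrite /E o0 !extE mulr0 add0r mulr1 mulrC.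
move=> i j i0 ij; rewrite E2_mull //.
have -> : (i == ord0) = false by apply/negbTE; rewrite -val_eqE /= -lt0n.
have -> : (i == ord_max) = false.
  apply/negbTE; rewrite -val_eqE /=; move: (ltn_ord j) ij; rewrite ltnS => jm ij.
  by rewrite neq_ltn (leq_trans ij jm).
case: (unliftP ord_max i) => [i' Ei|Ei]; last first.
  by move: ij; rewrite Ei /= ltnNge -ltnS ltn_ord.
rewrite Ei /E; case: (unliftP ord_max j) => [j' Ej|->]; rewrite ?Ej !extE //.
apply: Hs'.
  by move: i0; rewrite Ei lift_max.
by move: ij; rewrite Ei Ej !lift_max.
Qed.

End LTC.


Section Char.
Variable R : idomainType.

Definition GL n (phi psi : 'I_n -> R) (A : 'M[R]_n) :=
  forall i j, divides (phi i) (A i j * psi j).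

Lemma diagmE_r n (e : 'I_n -> R) (A : 'M[R]_n) i j : (A *m diagm e) i j = A i j * e j.
Proof. by rewrite /diagm mul_mx_diag !mxE. Qed.
Lemma diagmE_l n (e : 'I_n -> R) (A : 'M[R]_n) i j : (diagm e *m A) i j = e i * A i j.
Proof. by rewrite /diagm mul_diag_mx !mxE. Qed.

Lemma det_diagm n (e : 'I_n -> R) : \det (diagm e) = \prod_i e i.
Proof. by rewrite /diagm det_diag; apply: eq_bigr => i _; rewrite mxE. Qed.

Lemma transfer_unit n (phi : 'I_n -> R) (A B : 'M[R]_n) : (forall i, phi i != 0) ->
  A *m diagm phi = diagm phi *m B -> (A \in unitmx) = (B \in unitmx).
Proof.
move=> Hp E; have : \det A * \det (diagm phi) = \det B * \det (diagm phi).
  rewrite -!det_mulmx E !det_mulmx; exact: mulrC.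
have Hd : \det (diagm phi) != 0 by rewrite det_diagm; apply/prodf_neq0 => i _; exact: Hp.
by move/(mulIf Hd); rewrite !unitmxE => ->.
Qed.

Lemma G_char n (phi : 'I_n -> R) (H : 'M[R]_n) : (forall i, phi i != 0) ->
  G_Phi (diagm phi) H <-> H \in unitmx /\ GL phi phi H.
Proof.
move=> Hp; split.
  move=> [HU [K [_ E]]]; split => // i j.
  have := congr1 (fun M : 'M[R]_n => M i j) E; rewrite /= diagmE_r diagmE_l => ->.
  by exists (K i j); rewrite mulrC.
move=> [HU HG]; pose K := \matrix_(i, j) dq (phi i) (H i j * phi j).
have E : H *m diagm phi = diagm phi *m K.
  apply/matrixP => i j; rewrite diagmE_r diagmE_l mxE [RHS]mulrC; apply: dqP; exact: HG.
split => //; exists K; split => //; by rewrite -(transfer_unit Hp E).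
Qed.

Lemma L_char n (eps phi : 'I_n -> R) (L : 'M[R]_n) :
  L_set (diagm eps) (diagm phi) L <-> L \in unitmx /\ GL phi eps L.
Proof.
split.
  move=> [HU [S E]]; split => // i j.
  have := congr1 (fun M : 'M[R]_n => M i j) E; rewrite /= diagmE_r diagmE_l => ->.
  by exists (S i j); rewrite mulrC.
move=> [HU HG]; split => //; exists (\matrix_(i, j) dq (phi i) (L i j * eps j)).
apply/matrixP => i j; rewrite diagmE_r diagmE_l mxE [RHS]mulrC; apply: dqP; exact: HG.
Qed.

Lemma GL_mul n (phi psi : 'I_n -> R) (H L : 'M[R]_n) :
  GL phi phi H -> GL phi psi L -> GL phi psi (H *m L).
Proof.
move=> HH HL i j; rewrite mxE mulr_suml; apply: div_sum => k _.
have [c Ec] := HL k j; rewrite -mulrA Ec mulrCA.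
by apply: div_mull; apply: HH.
Qed.

Lemma G_mul n (phi : 'I_n -> R) (H1 H2 : 'M[R]_n) :
  G_Phi (diagm phi) H1 -> G_Phi (diagm phi) H2 -> G_Phi (diagm phi) (H1 *m H2).
Proof.
move=> [U1 [K1 [V1 E1]]] [U2 [K2 [V2 E2]]]; split; first by rewrite unitmx_mul U1.
exists (K1 *m K2); split; first by rewrite unitmx_mul V1.
by rewrite -mulmxA E2 mulmxA E1 mulmxA.
Qed.

Lemma G_inv n (phi : 'I_n -> R) (H : 'M[R]_n) :
  G_Phi (diagm phi) H -> G_Phi (diagm phi) (invmx H).
Proof.
move=> [U [K [V E]]]; split; first by rewrite unitmx_inv.
exists (invmx K); split; first by rewrite unitmx_inv.
rewrite -[LHS](mulmxK V) -[invmx H *m _ *m K]mulmxA -E mulKmx //.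
Qed.

Lemma chain n (e : 'I_n -> R) : (forall i j : 'I_n, (j : nat) = i.+1 -> divides (e i) (e j)) ->
  forall i j : 'I_n, (i <= j)%N -> divides (e i) (e j).
Proof.
move=> H; suff S : forall d (i j : 'I_n), (j : nat) = (i + d)%N -> divides (e i) (e j).
  by move=> i j ij; apply: (S (j - i)%N); rewrite subnKC.
elim => [|d IH] i j E.
  have -> : j = i by apply/val_inj; rewrite /= E addn0.
  exact: div_refl.
have Hk : (i + d < n)%N by have := ltn_ord j; rewrite E addnS => /ltnW.
apply: (div_trans (IH i (Ordinal Hk) erefl)); apply: H; by rewrite /= E addnS.
Qed.

End Char.


Section Uniq.
Variable R : idomainType.
Variable gcdf : R -> R -> R.
Variable Kr : R -> pred R.
Hypothesis HK : forall f : R, complete_residues f (Kr f).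

Lemma V_entry_eq n (eps phi : 'I_n -> R) (Hphi : forall i, phi i != 0) (V1 V2 : 'M_n) (i l : 'I_n) c :
  V_set gcdf Kr eps phi V1 -> V_set gcdf Kr eps phi V2 -> (l < i)%N ->
  V1 i l = c + V2 i l -> divides (phi i) (c * phi l) -> c = 0.
Proof.
move=> [_ [_ H1]] [_ [_ H2]] li E Hd.
have [q1 [f1 [k1 [Eq1 Ef1 Hk1 Ev1]]]] := H1 i l li.
have [q2 [f2 [k2 [Eq2 Ef2 Hk2 Ev2]]]] := H2 i l li.
set g := gcdf (phi i) (eps l) in Eq1 Eq2 Ef1 Ef2.
have g0 : g != 0 by apply: contraNneq (Hphi i) => g0; rewrite -Eq1 g0 mulr0.
have q0 : q1 != 0 by apply: contraNneq (Hphi i) => q0; rewrite -Eq1 q0 mul0r.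
have Eq : q2 = q1 by apply: (mulIf g0); rewrite Eq1 Eq2.
have Ef : f2 = f1 by apply: (mulIf (Hphi l)); rewrite Ef1 Ef2.
subst q2 f2.
have [x Hx] := Hd.
have Ec : c = x * q1 * f1.
  apply: (mulIf (Hphi l)); rewrite Hx -Eq1 -Ef1; ring.
have Ek : k1 - k2 = x * f1.
  apply: (mulfI q0); rewrite mulrBr -Ev1 -Ev2 E Ec; ring.
have [k [[_ _] Hu]] := HK f1 k1.
have e1 : k = k1 by apply: Hu; split => //; rewrite subrr; exact: div0.
have e2 : k = k2 by apply: Hu; split => //; rewrite Ek; exists x.
by move: E; rewrite Ev1 Ev2 -e1 -e2 => /eqP; rewrite -subr_eq subrr eq_sym => /eqP.
Qed.

Lemma V_unique n (eps phi : 'I_n -> R) (Hphi : forall i, phi i != 0) (V1 V2 W : 'M_n) :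
  V_set gcdf Kr eps phi V1 -> V_set gcdf Kr eps phi V2 -> GL phi phi W ->
  V1 = W *m V2 -> V1 = V2.
Proof.
move=> HV1 HV2 HW E.
suff Wid : forall i l : 'I_n, W i l = (i == l)%:R.
  have W1 : W = 1%:M by apply/matrixP => i l; rewrite Wid mxE.
  by rewrite E W1 mul1mx.
suff S : forall d (i l : 'I_n), (n - l <= d)%N -> W i l = (i == l)%:R.
  by move=> i l; apply: (S (n - l)%N).
have [V1d [V1u _]] := HV1; have [V2d [V2u _]] := HV2.
elim => [|d IH] i l Hd.
  by move: Hd; rewrite leqn0 subn_eq0 leqNgt ltn_ord.
have E1 : V1 i l = W i l + (if i == l then 0 else V2 i l).
  rewrite E mxE (bigD1 l) //= V2d mulr1; congr (_ + _).
  have -> : \sum_(k | k != l) W i k * V2 k l = \sum_(k | k != l) (i == k)%:R * V2 k l.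
    apply: eq_bigr => k kl; case: (ltngtP k l) => [kl'|lk|/val_inj e]; last by rewrite e eqxx in kl.
      by rewrite V2u // !mulr0.
    by rewrite IH //; move: Hd lk; lia.
  case: (eqVneq i l) => [->|il].
    by rewrite big1 // => k kl; rewrite eq_sym (negPf kl) mul0r.
  rewrite (bigD1 i) //= eqxx mul1r big1 ?addr0 // => k /andP[_ ki].
  by rewrite eq_sym (negPf ki) mul0r.
case: (ltngtP i l) => [il|li|/val_inj e].
- have il' : (i == l) = false by rewrite -val_eqE /= ltn_eqF.
  by move: E1; rewrite V1u // V2u // il' addr0 => /esym ->.
- have il' : (i == l) = false by rewrite -val_eqE /= gtn_eqF.
  rewrite il'; apply: (V_entry_eq Hphi HV1 HV2 li); last exact: HW.
  by rewrite E1 il'.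
- by move: E1; rewrite e V1d eqxx addr0 => ->.
Qed.

End Uniq.


Section Nec.
Variable R : idomainType.
Hypothesis Hedd : elementary_divisor_domain R.
Variable gcdf : R -> R -> R.
Hypothesis Hgcd : forall a b : R, is_gcd a b (gcdf a b).
Variable Kr : R -> pred R.

Lemma necessity n (eps phi : 'I_n -> R) :
  nonsing_dseq phi -> (forall i, divides (phi i) (eps i)) ->
  (forall L : 'M[R]_n, L_set (diagm eps) (diagm phi) L ->
     exists! V : 'M[R]_n, V_set gcdf Kr eps phi V /\
       exists H : 'M[R]_n, G_Phi (diagm phi) H /\ V = H *m L) ->
  (forall i j : 'I_n, (i : nat) = j.+1 -> ~ assoc (phi i) (phi j) ->
     forall q r delta : R,
       q * phi j = phi i ->
       r * gcdf (phi i) (eps j) = phi i ->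
       divides delta q -> delta \isn't a GRing.unit ->
       gcdf delta r \isn't a GRing.unit).
Proof.
move=> [Hp0 Hpc] Hdiv HL i j Eij _ q r de Hq Hr Hdq Hdu.
apply/negP => Hg.
have [x [y Hxy]] := gcd_unit_cop Hedd Hgcd Hg.
have ji : j != i by rewrite -val_eqE /= Eij neq_ltn ltnSn.
pose L := E2 j i x (- y) r de.
have HLu : L \in unitmx by apply: E2_unit => //; rewrite -Hxy; ring.
have HLG : GL phi eps L.
  move=> a b; rewrite mxE.
  case: ifP => [/eqP->|_].
    case: ifP => [/eqP->|_]; first by apply: div_mull; exact: Hdiv.
    case: ifP => [/eqP->|_]; last by rewrite mul0r; exact: div0.
    by apply: div_mull; apply: (div_trans (Hpc j i Eij)); exact: Hdiv.
  case: ifP => [/eqP->|_].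
    case: ifP => [/eqP->|_].
      have [_ [e He] _] := Hgcd (phi i) (eps j).
      by rewrite He; exists e; rewrite -[in RHS]Hr; ring.
    case: ifP => [/eqP->|_]; last by rewrite mul0r; exact: div0.
    by apply: div_mull; exact: Hdiv.
  case: (eqVneq a b) => [->|_]; last by rewrite mul0r; exact: div0.
  by rewrite mul1r; exact: Hdiv.
have [V [[[HV1 _] [H [HG EV]]] _]] := HL L (proj2 (L_char eps phi L) (conj HLu HLG)).
have [_ HGH] := proj1 (G_char H Hp0) HG.
have E1 : 1 = H i j * (- y) + H i i * de.
  by rewrite -(HV1 i) EV E2_mulr // eq_sym (negPf ji) eqxx.
have [c Hc] := HGH i j.
have Hij : H i j = c * q by apply: (mulIf (Hp0 j)); rewrite Hc -Hq mulrA.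
move/negP: Hdu; apply; apply: div_one_unit; rewrite E1.
apply: div_add; last by apply: div_mull; exact: div_refl.
by rewrite Hij; apply: div_mulr; apply: div_mull.
Qed.

End Nec.


Section Exist.
Variable R : idomainType.
Hypothesis Hedd : elementary_divisor_domain R.
Variable gcdf : R -> R -> R.
Hypothesis Hgcd : forall a b : R, is_gcd a b (gcdf a b).
Variable Kr : R -> pred R.
Hypothesis HK : forall f : R, complete_residues f (Kr f).

Definition Cond n (eps phi : 'I_n -> R) :=
  forall i j : 'I_n, (i : nat) = j.+1 -> ~ assoc (phi i) (phi j) ->
     forall q r delta : R,
       q * phi j = phi i ->
       r * gcdf (phi i) (eps j) = phi i ->
       divides delta q -> delta \isn't a GRing.unit ->
       gcdf delta r \isn't a GRing.unit.

Lemma gcd_div_l a b : divides (gcdf a b) a. Proof. by have [] := Hgcd a b. Qed.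
Lemma gcd_div_r a b : divides (gcdf a b) b. Proof. by have [] := Hgcd a b. Qed.

Lemma first_row n (eps phi : 'I_n.+1 -> R) :
  nonsing_dseq eps -> nonsing_dseq phi -> Cond eps phi ->
  forall L : 'M[R]_n.+1, L \in unitmx -> GL phi eps L ->
  forall d, (forall j, divides d (invmx L ord0 j * dq (phi ord0) (phi j))) ->
  d \is a GRing.unit.
Proof.
move=> [He0 Hec] [Hp0 Hpc] HC L HLu HLG d Hd.
set M := invmx L.
have ML : M *m L = 1%:M by rewrite mulVmx.
pose mm (i j : 'I_n.+1) := dq (phi j) (phi i).
have mmP : forall i j : 'I_n.+1, (j <= i)%N -> phi i = mm i j * phi j.
  by move=> i j ji; apply: dqP; apply: chain.
have sum1 : 1 = \sum_k M ord0 k * L k ord0.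
  by have := congr1 (fun A : 'M[R]_n.+1 => A ord0 ord0) ML; rewrite /= !mxE eqxx => ->.
suff S : forall s, (s < n.+1)%N ->
    (forall j : 'I_n.+1, (j <= s)%N -> divides d (M ord0 j)) /\ cop d (mm (inord s) ord0).
  have [H _] := S n (ltnSn n).
  apply: div_one_unit; rewrite sum1; apply: div_sum => k _.
  by apply: div_mulr; apply: H; rewrite -ltnS.
elim => [|s IH] Hs.
  have mm00 : mm ord0 ord0 = 1.
    by apply: (mulIf (Hp0 ord0)); rewrite mul1r -mmP.
  have i0 : inord 0 = ord0 :> 'I_n.+1 by apply/val_inj; rewrite /= inordK.
  split; last by rewrite i0 mm00; apply: cop_unit; exact: unitr1.
  move=> j; rewrite leqn0 => /eqP j0; have -> : j = ord0 by apply/val_inj.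
  by have := Hd ord0; rewrite -/(mm ord0 ord0) mm00 mulr1.
have [IH1 IH2] := IH (ltnW Hs).
set S := inord s : 'I_n.+1; set S1 := inord s.+1 : 'I_n.+1.
have vS : (S : nat) = s by rewrite /S inordK // ltnW.
have vS1 : (S1 : nat) = s.+1 by rewrite /S1 inordK.
set a := mm S1 S.
have Ha : phi S1 = a * phi S by apply: mmP; rewrite vS vS1.
have [e [x [y [Ee [Hed Hea]]]]] := bez Hedd d a.
set r := dq (gcdf (phi S1) (eps S)) (phi S1).
have Hr : r * gcdf (phi S1) (eps S) = phi S1 by rewrite /r -dqP //; exact: gcd_div_l.
have Hcd : forall de, divides de e -> divides de r -> divides de 1.
  move=> de Hde1 Hde2; rewrite sum1; apply: div_sum => k _.
  case: (leqP k s) => ks.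
    by apply: div_mulr; apply: (div_trans Hde1); apply: (div_trans Hed); exact: IH1.
  apply: div_mull; apply: (div_trans Hde2).
  apply: (qdiv Hedd Hgcd (Hp0 S1) Hr).
  have H1 : divides (phi S1) (phi k) by apply: chain => //; rewrite vS1.
  have H2 : divides (eps ord0) (eps S) by apply: chain.
  have [c Hc] := H2; rewrite Hc mulrCA; apply: div_mull.
  exact: (div_trans H1 (HLG k ord0)).
have Hgu : gcdf e r \is a GRing.unit.
  by apply: div_one_unit; apply: Hcd; [exact: gcd_div_l|exact: gcd_div_r].
have Heu : e \is a GRing.unit.
  case: (boolP (a \is a GRing.unit)) => Hau; first exact: div_unit Hea Hau.
  apply/negPn/negP => Hen.
  have Hna : ~ assoc (phi S1) (phi S).
    move=> [[c Hc] _]; move/negP: Hau; apply; apply/unitrPr; exists c.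
    apply: (mulIf (Hp0 S)); rewrite mul1r {2}Hc Ha; ring.
  have vSS : (S1 : nat) = S.+1 by rewrite vS vS1.
  have := HC S1 S vSS Hna a r e (esym Ha) Hr Hea Hen.
  by rewrite Hgu.
have Hcop : cop d a.
  by exists (e^-1 * x), (e^-1 * y); rewrite -!mulrA -mulrDr -Ee mulVr.
have HmS1 : mm S1 ord0 = a * mm S ord0.
  apply: (mulIf (Hp0 ord0)); rewrite -mmP // -mulrA -mmP //.
have Hcop1 : cop d (mm S1 ord0) by rewrite HmS1; exact: cop_mul.
split; last by [].
move=> j; rewrite leq_eqVlt ltnS => /orP[/eqP js|]; last exact: IH1.
have -> : j = S1 by apply/val_inj; rewrite /= vS1.
apply: (cop_div Hcop1); rewrite mulrC; exact: Hd.
Qed.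


Lemma existence n : forall (eps phi : 'I_n -> R),
  nonsing_dseq eps -> nonsing_dseq phi -> (forall i, divides (phi i) (eps i)) ->
  Cond eps phi ->
  forall L : 'M[R]_n, L \in unitmx -> GL phi eps L ->
  exists V H : 'M[R]_n, [/\ V_set gcdf Kr eps phi V, H \in unitmx, GL phi phi H & V = H *m L].
Proof.
elim: n => [|n IH] eps phi Heps Hphi Hdiv HC L HLu HLG.
  exists L, 1%:M; split.
  - by split; [case|split; case].
  - exact: unitmx1.
  - by case.
  - by rewrite mul1mx.
have [Hp0 Hpc] := Hphi; have [He0 Hec] := Heps.
set M := invmx L.
pose mm (i j : 'I_n.+1) := dq (phi j) (phi i).
have mmP : forall i j : 'I_n.+1, (j <= i)%N -> phi i = mm i j * phi j.
  by move=> i j ji; apply: dqP; apply: chain.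
pose u j := M ord0 j * mm j ord0.
have Hu : forall d, (forall j, divides d (u j)) -> d \is a GRing.unit.
  exact: (first_row Heps Hphi HC HLu HLG).
have [g [K0 [HK0 [Hg Hs]]]] := LTC Hedd u.
have gu : g \is a GRing.unit.
  by apply: Hu => j; rewrite Hg; exists (K0 ord0 j); rewrite mulrC.
pose K := diag_mx (\row_i (if i == ord0 then g else 1)) *m K0.
have KE : forall i j, K i j = if i == ord0 then u j else K0 i j.
  move=> i j; rewrite /K mul_diag_mx !mxE; case: ifP => [/eqP->|_]; by rewrite ?Hg ?mul1r.
have HKu : K \in unitmx.
  rewrite /K unitmx_mul HK0 andbT unitmxE det_diag big_ord_recl big1 ?mulr1 ?mxE ?eqxx //.
  by move=> i _; rewrite mxE eq_sym (negPf (neq_lift _ _)).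
pose Q := \matrix_(i, j) if i == ord0 then M ord0 j
                         else if (j <= i)%N then K i j * mm i j else 0.
have QE : Q *m diagm phi = diagm phi *m K.
  apply/matrixP => i j; rewrite diagmE_r diagmE_l mxE KE.
  case: (eqVneq i ord0) => [->|i0].
    by rewrite /u (mmP j ord0) //; ring.
  case: leqP => ji.
    by rewrite (mmP i j) //; ring.
  by rewrite Hs ?mulr0 ?mul0r // lt0n; move: i0; rewrite -val_eqE.
have HQu : Q \in unitmx by rewrite (transfer_unit Hp0 QE).
have HQG : GL phi phi Q.
  move=> i j; have := congr1 (fun A : 'M[R]_n.+1 => A i j) QE.
  by rewrite /= diagmE_r diagmE_l => ->; exists (K i j); rewrite mulrC.
pose X := Q *m L.
have X0 : forall j, X ord0 j = (ord0 == j)%:R.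
  move=> j; have := congr1 (fun A : 'M[R]_n.+1 => A ord0 j) (mulVmx HLu).
  rewrite /= !mxE => <-; apply: eq_bigr => k _; by rewrite mxE eqxx.
have HXG : GL phi eps X := GL_mul HQG HLG.
have HXu : X \in unitmx by rewrite unitmx_mul HQu.
pose x := fun i => X (lift ord0 i) ord0.
pose B := \matrix_(i, j) X (lift ord0 i) (lift ord0 j).
have XE : X = ext ord0 1 (fun _ => 0) x B.
  apply/matrixP => i j.
  case: (unliftP ord0 i) => [i' ->|->]; case: (unliftP ord0 j) => [j' ->|->]; rewrite !extE.
  - by rewrite /B [in RHS]mxE.
  - by [].
  - by rewrite X0 (negPf (neq_lift _ _)).
  - by rewrite X0 eqxx.
have HBu : B \in unitmx by rewrite unitmxE -(det_ext0 x B) -XE -unitmxE.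
pose phi' := fun i : 'I_n => phi (lift ord0 i).
pose eps' := fun i : 'I_n => eps (lift ord0 i).
have Heps' : nonsing_dseq eps'.
  split => [i|i j ji]; first exact: He0.
  by apply: Hec; rewrite /= /bump /= !add1n ji.
have Hphi' : nonsing_dseq phi'.
  split => [i|i j ji]; first exact: Hp0.
  by apply: Hpc; rewrite /= /bump /= !add1n ji.
have Hdiv' : forall i, divides (phi' i) (eps' i) by move=> i; exact: Hdiv.
have HC' : Cond eps' phi'.
  by move=> i j ij; apply: HC; rewrite /= /bump /= !add1n ij.
have HBG : GL phi' eps' B by move=> i j; rewrite mxE; exact: HXG.
have [V' [H' [HV' HH'u HH'G EV']]] := IH eps' phi' Heps' Hphi' Hdiv' HC' B HBu HBG.
pose Y := ext ord0 1 (fun _ => 0) (fun _ => 0) H'.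
have HYu : Y \in unitmx by rewrite unitmxE det_ext0 -unitmxE.
have HYG : GL phi phi Y.
  move=> i j; case: (unliftP ord0 i) => [i' ->|->]; case: (unliftP ord0 j) => [j' ->|->];
    rewrite !extE ?mul0r ?mul1r; try exact: div0; try exact: div_refl.
  exact: HH'G.
pose z := fun i => \sum_k H' i k * x k.
have YX : Y *m X = ext ord0 1 (fun _ => 0) z (H' *m B).
  rewrite XE ext_mul mulr1 big1 ?addr0; last by move=> k _; rewrite mul0r.
  congr ext; [apply: functional_extensionality => j|apply: functional_extensionality => i|].
  - by rewrite mulr0 add0r big1 // => k _; rewrite mul0r.
  - by rewrite mul0r add0r.
  - by apply/matrixP => i j; rewrite !mxE mul0r addr0.
have HYXG : GL phi eps (Y *m X) := GL_mul HYG HXG.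
pose gg i := gcdf (phi (lift ord0 i)) (eps ord0).
pose qq i := dq (gg i) (phi (lift ord0 i)).
have Hq : forall i, qq i * gg i = phi (lift ord0 i).
  by move=> i; rewrite /qq -dqP //; exact: gcd_div_l.
pose ff i := dq (phi ord0) (gg i).
have Hf : forall i, ff i * phi ord0 = gg i.
  move=> i; rewrite /ff -dqP //; have [_ _ Hm] := Hgcd (phi (lift ord0 i)) (eps ord0).
  by apply: Hm; [apply: chain|exact: Hdiv].
have Hz : forall i, divides (qq i) (z i).
  move=> i; apply: (qdiv Hedd Hgcd (Hp0 (lift ord0 i)) (Hq i)).
  by have := HYXG (lift ord0 i) ord0; rewrite YX extE.
pose ss i := dq (qq i) (z i).
have Hss : forall i, z i = ss i * qq i by move=> i; apply: dqP.
pose kk i := epsilon (inhabits 0) (fun k => k \in Kr (ff i) /\ divides (ff i) (ss i - k)).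
have Hk : forall i, kk i \in Kr (ff i) /\ divides (ff i) (ss i - kk i).
  move=> i; apply: (epsilon_spec (inhabits 0) (fun k => k \in Kr (ff i) /\ divides (ff i) (ss i - k))).
  by have [k [Hk _]] := HK (ff i) (ss i); exists k.
pose tt i := dq (ff i) (ss i - kk i).
have Ht : forall i, ss i = kk i + tt i * ff i.
  by move=> i; rewrite -(dqP (proj2 (Hk i))) addrC subrK.
pose w i := - (tt i * (qq i * ff i)).
pose y i := qq i * kk i.
have wz : forall i, w i + z i = y i by move=> i; rewrite Hss Ht /w /y; ring.
pose W := ext ord0 1 (fun _ => 0) w 1%:M.
have HWu : W \in unitmx by rewrite unitmxE det_ext0 det1 unitr1.
have HWG : GL phi phi W.
  move=> i j; case: (unliftP ord0 i) => [i' ->|->]; case: (unliftP ord0 j) => [j' ->|->];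
    rewrite !extE ?mul0r ?mul1r; try exact: div0; try exact: div_refl.
  - rewrite mxE; case: eqP => [->|_]; last by rewrite mul0r; exact: div0.
    by rewrite mul1r; exact: div_refl.
  - by exists (- tt i'); rewrite /w -Hq -Hf; ring.
have WYX : W *m (Y *m X) = ext ord0 1 (fun _ => 0) y V'.
  rewrite YX ext_mul mulr1 big1 ?addr0; last by move=> k _; rewrite mul0r.
  congr ext; [apply: functional_extensionality => j|apply: functional_extensionality => i|].
  - by rewrite mulr0 add0r big1 // => k _; rewrite mul0r.
  - rewrite mulr1 -wz; congr (_ + _); rewrite /z.
    by under eq_bigr do rewrite mxE; rewrite sum_delta.
  - by rewrite mul1mx EV'; apply/matrixP => i j; rewrite !mxE mulr0 addr0.
exists (ext ord0 1 (fun _ => 0) y V'), (W *m (Y *m Q)); split.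
- have [V'd [V'u V'l]] := HV'.
  split; [|split].
  + move=> i; case: (unliftP ord0 i) => [i' ->|->]; by rewrite !extE.
  + move=> i j; case: (unliftP ord0 i) => [i' ->|->]; case: (unliftP ord0 j) => [j' ->|->];
      rewrite !extE //= /bump /= ?add1n ?ltnS //; exact: V'u.
  + move=> i j; case: (unliftP ord0 i) => [i' ->|->]; case: (unliftP ord0 j) => [j' ->|->];
      rewrite !extE //= /bump /= ?add1n ?ltnS //.
    * exact: V'l.
    * move=> _; exists (qq i'), (ff i'), (kk i'); split; [exact: Hq|exact: Hf|exact: (proj1 (Hk i'))|by []].
- by rewrite !unitmx_mul HWu HYu HQu.
- exact: GL_mul HWG (GL_mul HYG HQG).
- by rewrite -WYX /X !mulmxA.
Qed.

End Exist.

Unset Implicit Arguments.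
Set Strict Implicit.

Theorem theorem5p7 (R : idomainType) (n : nat)
    (gcdf : R -> R -> R) (K : R -> pred R) (eps phi : 'I_n -> R) :
  elementary_divisor_domain R ->
  (forall a b : R, is_gcd a b (gcdf a b)) ->
  (forall f : R, complete_residues f (K f)) ->
  nonsing_dseq eps -> nonsing_dseq phi ->
  (forall i, divides (phi i) (eps i)) ->
  (forall L : 'M[R]_n, L_set (diagm eps) (diagm phi) L ->
     exists! V : 'M[R]_n, V_set gcdf K eps phi V /\
       exists H : 'M[R]_n, G_Phi (diagm phi) H /\ V = H *m L)
  <->
  (forall i j : 'I_n, (i : nat) = j.+1 -> ~ assoc (phi i) (phi j) ->
     forall q r delta : R,
       q * phi j = phi i ->
       r * gcdf (phi i) (eps j) = phi i ->
       divides delta q -> delta \isn't a GRing.unit ->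
       gcdf delta r \isn't a GRing.unit).
Proof.
move=> Hedd Hgcd HK Heps Hphi Hdiv; split.
  by move=> HL; exact: (necessity Hedd Hgcd Hphi Hdiv HL).
move=> HC L HL; have [HLu HLG] := proj1 (L_char eps phi L) HL.
have Hp0 := proj1 Hphi.
have [V [H [HV HHu HHG EV]]] := existence Hedd Hgcd HK Heps Hphi Hdiv HC HLu HLG.
exists V; split.
  split => //; exists H; split => //; apply/(G_char H Hp0); split => //.
move=> V2 [HV2 [H2 [HG2 EV2]]].
have HG1 : G_Phi (diagm phi) H by apply/(G_char H Hp0).
have [_ HW] := proj1 (G_char _ Hp0) (G_mul HG1 (G_inv HG2)).
apply: (V_unique HK Hp0 HV HV2 HW).
have [HU2 _] := HG2.
by rewrite EV2 -mulmxA mulKmx // EV.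
Qed.
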